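(* Let $(u_n)_{n\ge0}$ be the Tetranacci numbers, defined by $u_0=0$, $u_1=1$, $u_2=1$, $u_3=2$ and $u_{n+4}=u_{n+3}+u_{n+2}+u_{n+1}+u_n$ for $n\ge0$. For integers $n$ define $t_n=\tfrac12 u_nu_{n+2}$ if $n\ge0$ and $t_n=0$ if $n<0$. Then for every $n\ge1$, \[ \sum_{0\le k\le n}u_k^2=\frac13+\frac13\bigl(2t_{n}+t_{n-1}-t_{n-2}-t_{n-3}+5t_{n-4}+4t_{n-5}+t_{n-6}+t_{n-7}-t_{n-8}-t_{n-9}\bigr). \] *)

(* Defs.v *)
From mathcomp Require Import all_boot all_order all_algebra.
Set Implicit Arguments. Unset Strict Implicit. Unset Printing Implicit Defensive.
Import Order.TTheory GRing.Theory Num.Theory.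
Local Open Scope ring_scope.

Fixpoint tetra (n : nat) : nat :=
  match n with
  | 0 => 0
  | 1 => 1
  | 2 => 1
  | 3 => 2
  | S ((S ((S ((S m) as m1)) as m2)) as m3) =>
      tetra m3 + tetra m2 + tetra m1 + tetra m
  end%N.

Definition tt (n : int) : rat :=
  match n with
  | Posz m => ((tetra m * tetra m.+2)%N)%:R / 2
  | Negz _ => 0
  end.
Example tetra_check : map tetra (iota 0 8) = [:: 0; 1; 1; 2; 4; 8; 15; 29]%N.
Proof. by []. Qed.

(* Main.v *)
Require Import Defs.
From mathcomp Require Import all_boot all_order all_algebra.
From mathcomp Require Import ring lra zify.
Import Order.TTheory GRing.Theory Num.Theory.
Local Open Scope ring_scope.
Definition RHS (n:nat) : rat :=  1 / 3 + 1 / 3 * (2 * tt n + tt (n%:Z - 1) - tt (n%:Z - 2) - tt (n%:Z - 3)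
      + 5 * tt (n%:Z - 4) + 4 * tt (n%:Z - 5) + tt (n%:Z - 6) + tt (n%:Z - 7)
      - tt (n%:Z - 8) - tt (n%:Z - 9)).

Lemma base1 : (\sum_(0 <= k < 2) ((tetra k) ^ 2)%N%:R : rat) = RHS 1.
Proof. rewrite /RHS big_mkord !big_ord_recr big_ord0 /tt /=; field; by []. Qed.

Lemma base2 : (\sum_(0 <= k < 3) ((tetra k) ^ 2)%N%:R : rat) = RHS 2.
Proof. rewrite /RHS big_mkord !big_ord_recr big_ord0 /tt /=; field; by []. Qed.

Lemma base3 : (\sum_(0 <= k < 4) ((tetra k) ^ 2)%N%:R : rat) = RHS 3.
Proof. rewrite /RHS big_mkord !big_ord_recr big_ord0 /tt /=; field; by []. Qed.

Lemma base4 : (\sum_(0 <= k < 5) ((tetra k) ^ 2)%N%:R : rat) = RHS 4.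
Proof. rewrite /RHS big_mkord !big_ord_recr big_ord0 /tt /=; field; by []. Qed.

Lemma base5 : (\sum_(0 <= k < 6) ((tetra k) ^ 2)%N%:R : rat) = RHS 5.
Proof. rewrite /RHS big_mkord !big_ord_recr big_ord0 /tt /=; field; by []. Qed.

Lemma base6 : (\sum_(0 <= k < 7) ((tetra k) ^ 2)%N%:R : rat) = RHS 6.
Proof. rewrite /RHS big_mkord !big_ord_recr big_ord0 /tt /=; field; by []. Qed.

Lemma base7 : (\sum_(0 <= k < 8) ((tetra k) ^ 2)%N%:R : rat) = RHS 7.
Proof. rewrite /RHS big_mkord !big_ord_recr big_ord0 /tt /=; field; by []. Qed.

Lemma base8 : (\sum_(0 <= k < 9) ((tetra k) ^ 2)%N%:R : rat) = RHS 8.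
Proof. rewrite /RHS big_mkord !big_ord_recr big_ord0 /tt /=; field; by []. Qed.

Lemma base9 : (\sum_(0 <= k < 10) ((tetra k) ^ 2)%N%:R : rat) = RHS 9.
Proof. rewrite /RHS big_mkord !big_ord_recr big_ord0 /tt /=; field; by []. Qed.

Lemma base n : (1 <= n <= 9)%N -> (\sum_(0 <= k < n.+1) ((tetra k) ^ 2)%N%:R : rat) = RHS n.
Proof.
case: n => [|n]; first by [].
case: n => [|n]; first by move=> _; exact: base1.
case: n => [|n]; first by move=> _; exact: base2.
case: n => [|n]; first by move=> _; exact: base3.
case: n => [|n]; first by move=> _; exact: base4.
case: n => [|n]; first by move=> _; exact: base5.
case: n => [|n]; first by move=> _; exact: base6.
case: n => [|n]; first by move=> _; exact: base7.
case: n => [|n]; first by move=> _; exact: base8.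
case: n => [|n]; first by move=> _; exact: base9.
by [].
Qed.

Lemma tS k m : tetra (k.+4 + m) = (tetra (k.+3+m) + tetra (k.+2+m) + tetra (k.+1+m) + tetra (k+m))%N.
Proof. by rewrite !addSn. Qed.

Lemma tSR k m : (tetra (k.+4 + m))%:R = (tetra (k.+3+m))%:R + (tetra (k.+2+m))%:R + (tetra (k.+1+m))%:R + (tetra (k+m))%:R :> rat.
Proof. by rewrite tS 3!natrD. Qed.

Lemma step m : RHS (10 + m) = RHS (9 + m) + ((tetra (10 + m)) ^ 2)%N%:R.
Proof.
have e4 : (tetra (4 + m))%:R = 1%:R * (tetra (0 + m))%:R + 1%:R * (tetra (1 + m))%:R + 1%:R * (tetra (2 + m))%:R + 1%:R * (tetra (3 + m))%:R :> rat.
  by rewrite (tSR 0 m) ; ring.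
have e5 : (tetra (5 + m))%:R = 1%:R * (tetra (0 + m))%:R + 2%:R * (tetra (1 + m))%:R + 2%:R * (tetra (2 + m))%:R + 2%:R * (tetra (3 + m))%:R :> rat.
  by rewrite (tSR 1 m) e4; ring.
have e6 : (tetra (6 + m))%:R = 2%:R * (tetra (0 + m))%:R + 3%:R * (tetra (1 + m))%:R + 4%:R * (tetra (2 + m))%:R + 4%:R * (tetra (3 + m))%:R :> rat.
  by rewrite (tSR 2 m) e5 e4; ring.
have e7 : (tetra (7 + m))%:R = 4%:R * (tetra (0 + m))%:R + 6%:R * (tetra (1 + m))%:R + 7%:R * (tetra (2 + m))%:R + 8%:R * (tetra (3 + m))%:R :> rat.
  by rewrite (tSR 3 m) e6 e5 e4; ring.
have e8 : (tetra (8 + m))%:R = 8%:R * (tetra (0 + m))%:R + 12%:R * (tetra (1 + m))%:R + 14%:R * (tetra (2 + m))%:R + 15%:R * (tetra (3 + m))%:R :> rat.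
  by rewrite (tSR 4 m) e7 e6 e5 e4; ring.
have e9 : (tetra (9 + m))%:R = 15%:R * (tetra (0 + m))%:R + 23%:R * (tetra (1 + m))%:R + 27%:R * (tetra (2 + m))%:R + 29%:R * (tetra (3 + m))%:R :> rat.
  by rewrite (tSR 5 m) e8 e7 e6 e5; ring.
have e10 : (tetra (10 + m))%:R = 29%:R * (tetra (0 + m))%:R + 44%:R * (tetra (1 + m))%:R + 52%:R * (tetra (2 + m))%:R + 56%:R * (tetra (3 + m))%:R :> rat.
  by rewrite (tSR 6 m) e9 e8 e7 e6; ring.
have e11 : (tetra (11 + m))%:R = 56%:R * (tetra (0 + m))%:R + 85%:R * (tetra (1 + m))%:R + 100%:R * (tetra (2 + m))%:R + 108%:R * (tetra (3 + m))%:R :> rat.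
  by rewrite (tSR 7 m) e10 e9 e8 e7; ring.
have e12 : (tetra (12 + m))%:R = 108%:R * (tetra (0 + m))%:R + 164%:R * (tetra (1 + m))%:R + 193%:R * (tetra (2 + m))%:R + 208%:R * (tetra (3 + m))%:R :> rat.
  by rewrite (tSR 8 m) e11 e10 e9 e8; ring.
rewrite /RHS.
rewrite (_ : (9+m)%:Z - 1 = (8+m)%N :> int); last by lia.
rewrite (_ : (9+m)%:Z - 2 = (7+m)%N :> int); last by lia.
rewrite (_ : (9+m)%:Z - 3 = (6+m)%N :> int); last by lia.
rewrite (_ : (9+m)%:Z - 4 = (5+m)%N :> int); last by lia.
rewrite (_ : (9+m)%:Z - 5 = (4+m)%N :> int); last by lia.
rewrite (_ : (9+m)%:Z - 6 = (3+m)%N :> int); last by lia.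
rewrite (_ : (9+m)%:Z - 7 = (2+m)%N :> int); last by lia.
rewrite (_ : (9+m)%:Z - 8 = (1+m)%N :> int); last by lia.
rewrite (_ : (9+m)%:Z - 9 = (0+m)%N :> int); last by lia.
rewrite (_ : (10+m)%:Z - 1 = (9+m)%N :> int); last by lia.
rewrite (_ : (10+m)%:Z - 2 = (8+m)%N :> int); last by lia.
rewrite (_ : (10+m)%:Z - 3 = (7+m)%N :> int); last by lia.
rewrite (_ : (10+m)%:Z - 4 = (6+m)%N :> int); last by lia.
rewrite (_ : (10+m)%:Z - 5 = (5+m)%N :> int); last by lia.
rewrite (_ : (10+m)%:Z - 6 = (4+m)%N :> int); last by lia.
rewrite (_ : (10+m)%:Z - 7 = (3+m)%N :> int); last by lia.
rewrite (_ : (10+m)%:Z - 8 = (2+m)%N :> int); last by lia.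
rewrite (_ : (10+m)%:Z - 9 = (1+m)%N :> int); last by lia.
rewrite /tt -!addSn !natrM ?natrX.
rewrite ?e12 ?e11 ?e10 ?e9 ?e8 ?e7 ?e6 ?e5 ?e4.
field; by [].
Qed.

Lemma big9 m : (\sum_(0 <= k < (9 + m).+1) ((tetra k) ^ 2)%N%:R : rat) = RHS (9 + m).
Proof.
elim: m => [|m IH]; first by rewrite addn0; apply: base.
rewrite addnS -addSn big_nat_recr //= step -IH.
by rewrite addSn.
Qed.

Theorem mainTheorem1 (n : nat) (hn : (1 <= n)%N) :
  (\sum_(0 <= k < n.+1) ((tetra k) ^ 2)%N%:R : rat) =
  1 / 3 + 1 / 3 * (2 * tt n + tt (n%:Z - 1) - tt (n%:Z - 2) - tt (n%:Z - 3)
      + 5 * tt (n%:Z - 4) + 4 * tt (n%:Z - 5) + tt (n%:Z - 6) + tt (n%:Z - 7)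
      - tt (n%:Z - 8) - tt (n%:Z - 9)).
Proof.
rewrite -/(RHS n).
case: (leqP n 9) => h; first by apply: base; rewrite hn h.
have -> : n = (9 + (n - 9))%N by lia.
exact: big9.
Qed.
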